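(* For $a,b,c\in(0,1]$, \[\min\{a,b\}=\min_{x,y\in\mathbb{R}_+}\ ax+by\quad\text{subject to}\quad x^2+y^2-2cxy=1.\]
   Context: $\mathbb{R}_+$ denotes the nonnegative reals. *)

(* Defs.v *)
From Stdlib Require Import Reals.
Open Scope R_scope.

Definition feasible (c x y : R) : Prop :=
  0 <= x /\ 0 <= y /\ x ^ 2 + y ^ 2 - 2 * c * x * y = 1.

(* Main.v *)
Require Import Defs.
From Stdlib Require Import Reals Lra Psatz.
Open Scope R_scope.

Theorem lemma3 (a b c : R) (ha : 0 < a <= 1) (hb : 0 < b <= 1) (hc : 0 < c <= 1) :
  (exists x y : R, feasible c x y /\ a * x + b * y = Rmin a b) /\
  (forall x y : R, feasible c x y -> Rmin a b <= a * x + b * y).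
Proof.
  split.
  - unfold Rmin; destruct (Rle_dec a b).
    + exists 1, 0; unfold feasible; repeat split; try lra; ring.
    + exists 0, 1; unfold feasible; repeat split; try lra; ring.
  - intros x y [hx [hy he]].
    assert (hxy : 0 <= x * y) by nra.
    assert (hs2 : (x + y) * (x + y) >= 1) by nra.
    assert (hs : x + y >= 1) by nra.
    unfold Rmin; destruct (Rle_dec a b); nra.
Qed.
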